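(* Let $G$ be an undirected graph, $P$ a set of terminal pairs of $G$, and $x\in V(G)$ such that $G-\{x\}$ is a forest. Assume that each vertex of $G$ occurs in at most one terminal pair, every terminal has degree $1$ in $G$, the two terminals of a pair are not adjacent, every neighbor of $x$ is a leaf of $G-\{x\}$, and $x$ is not a terminal. Then there is a set of pairwise edge-disjoint paths in $G$ connecting every terminal pair in $P$ if and only if every tree $T$ (connected component) of $G-\{x\}$ is $\gamma_\emptyset$-connected.
   Context: For a tree $T$ of $G-\{x\}$, $T$ is $\gamma_\emptyset$-connected if there exists a set $S$ of pairwise edge-disjoint paths in $G[V(T)\cup\{x\}]$ such that for every terminal $a\in V(T)$ belonging to a terminal pair $\{a,b\}\in P$, the set $S$ either contains an $a$–$x$ path not containing $b$, or contains an $a$–$b$ path not containing $x$. *)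

(* Defs.v *)
From mathcomp Require Import all_boot.
From mathcomp Require Import finset.
Set Implicit Arguments. Unset Strict Implicit. Unset Printing Implicit Defensive.

Section Graphs.
Variable V : finType.

Definition simple_graph (e : rel V) := symmetric e /\ irreflexive e.

Definition del_vertex (e : rel V) (x : V) : rel V :=
  fun u v => [&& e u v, u != x & v != x].

Definition acyclic (e : rel V) :=
  forall c : seq V, 3 <= size c -> uniq c -> ~~ cycle e c.

Definition deg (e : rel V) (v : V) := #|[set w | e v w]|.

Definition pedges (p : seq V) : seq {set V} :=
  [seq [set uv.1; uv.2] | uv <- zip p (behead p)].

Definition is_path_in (e : rel V) (W : {set V}) (p : seq V) :=
  [/\ (if p is v :: q then path e v q else false), uniq p
      & {subset p <= W}].

Definition ends (p : seq V) (u v : V) :=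
  (head u p == u) && (last u p == v) || (head v p == v) && (last v p == u).

Definition edge_disjoint (p q : seq V) := ~~ has (mem (pedges q)) (pedges p).

Definition edp_family (e : rel V) (W : {set V}) (S : seq (seq V)) :=
  (forall p, p \in S -> is_path_in e W p) /\ pairwise edge_disjoint S.

Definition terminal_pairs (P : {set {set V}}) :=
  (forall p, p \in P -> #|p| = 2) /\
  (forall p q, p \in P -> q \in P -> p != q -> [disjoint p & q]).

Definition component (e : rel V) (v : V) : {set V} := [set w | connect e v w].

Definition gamma0_connected (e : rel V) (P : {set {set V}}) (x : V)
    (C : {set V}) :=
  exists S : seq (seq V), edp_family e (x |: C) S /\
    forall a b, a \in C -> [set a; b] \in P -> a != b ->
      (exists2 p, p \in S & ends p a x && (b \notin p)) \/
      (exists2 p, p \in S & ends p a b && (x \notin p)).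

End Graphs.

(* Main.v *)
Require Import Defs.
From mathcomp Require Import all_boot.
From Stdlib Require Import ClassicalEpsilon.
Set Implicit Arguments. Unset Strict Implicit. Unset Printing Implicit Defensive.

Section Aux.
Variable V : finType.
Implicit Types (s t : seq V) (E : {set V}).

Lemma pedges_cons2 (y z : V) t : pedges (y :: z :: t) = [set y; z] :: pedges (z :: t).
Proof. by []. Qed.

Lemma pedges_suffix s1 s2 : {subset pedges s2 <= pedges (s1 ++ s2)}.
Proof.
elim: s1 => // y s1 IH E HE /=.
move: (IH E HE); rewrite /=; case: (s1 ++ s2) => [|z u] //= H.
by rewrite pedges_cons2 in_cons H orbT.
Qed.

Lemma pedges_cat (y : V) s t : pedges (y :: s ++ t) = pedges (y :: s) ++ pedges (last y s :: t).
Proof.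
elim: s y => [|z s IH] y /=; first by case: t.
by rewrite !pedges_cons2 IH.
Qed.

Lemma pedges_prefix s1 s2 : {subset pedges s1 <= pedges (s1 ++ s2)}.
Proof.
case: s1 => [|y s] E //= H.
by rewrite pedges_cat mem_cat H.
Qed.

Lemma mem_pedgesP s E : E \in pedges s ->
  exists s1 s2 (y z : V), s = s1 ++ y :: z :: s2 /\ E = [set y; z].
Proof.
elim: s => [|y s IH] //; case: s IH => [|z s] IH //.
rewrite pedges_cons2 in_cons => /orP [/eqP -> | H].
  by exists [::], s, y, z.
case: (IH H) => s1 [s2 [u [w [-> ->]]]].
by exists (y :: s1), s2, u, w.
Qed.

Lemma pedges_rev1 s E : E \in pedges s -> E \in pedges (rev s).
Proof.
case/mem_pedgesP => s1 [s2 [y [z [-> ->]]]].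
rewrite rev_cat !rev_cons !cat_rcons.
apply: pedges_suffix; by rewrite pedges_cons2 in_cons setUC eqxx.
Qed.

Lemma pedges_rev s : pedges (rev s) =i pedges s.
Proof.
move=> E; apply/idP/idP; last exact: pedges_rev1.
by move/pedges_rev1; rewrite revK.
Qed.

Lemma pedges_uniq s E : uniq s -> E \in pedges s ->
  exists y z, [/\ y != z, y \in s, z \in s & E = [set y; z]].
Proof.
move=> Us /mem_pedgesP [s1 [s2 [y [z [Es ->]]]]].
exists y, z; rewrite Es; split => //.
- move: Us; rewrite Es cat_uniq /= => /and3P [_ _ /andP [H _]].
  by apply: contraNneq H => ->; rewrite in_cons eqxx.
- by rewrite mem_cat in_cons eqxx orbT.
- by rewrite mem_cat !in_cons eqxx !orbT.
Qed.

Variable e : rel V.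
Hypothesis sym : symmetric e.

Definition wk s := if s is y :: t then path e y t else false.

Lemma wk_rev s : wk s -> wk (rev s).
Proof.
case: s => [|y t] //= H.
rewrite (lastI y t) rev_rcons /= rev_path.
by rewrite (@eq_path _ _ e) // => a b; rewrite sym.
Qed.

Lemma orient p (u v : V) : wk p -> uniq p -> ends p u v -> u != v ->
  exists t, [/\ path e u t, uniq (u :: t), last u t = v &
    {subset pedges (u :: t) <= pedges p}].
Proof.
case: p => [|h t0].
  by move=> _ _; rewrite /ends /= => /orP [] /andP [_ /eqP ->]; rewrite eqxx.
move=> W U; rewrite /ends /= => /orP [/andP [/eqP Eh /eqP El] | /andP [/eqP Eh /eqP El]] Nuv.
  by subst h; exists t0; split.
have E1 : rev (h :: t0) = u :: rev (belast h t0).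
  by rewrite (lastI h t0) rev_rcons El.
exists (rev (belast h t0)); split.
- by have := wk_rev (W : wk (h :: t0)); rewrite E1.
- by move: U; rewrite -rev_uniq E1.
- have : last u (u :: rev (belast h t0)) = h by rewrite -E1 rev_cons last_rcons.
  by rewrite /= Eh.
- by move=> E; rewrite -E1 pedges_rev.
Qed.

Lemma shorten_walk t (y : V) : path e y t ->
  exists t', [/\ path e y t', uniq (y :: t'), last y t' = last y t &
    {subset pedges (y :: t') <= pedges (y :: t)}].
Proof.
elim: t y => [|z t IH] y /=; first by move=> _; exists [::].
case/andP => eyz /IH [t' [P' U' L' S']].
case: (boolP (y \in z :: t')) => Hy.
  have W2 : wk (z :: t') by [].
  have L2 : last y (z :: t') = last z t by [].
  have S2 : {subset pedges (z :: t') <= pedges (y :: z :: t)}.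
    by move=> E /S' H; rewrite pedges_cons2 in_cons H orbT.
  move: (z :: t') W2 U' L2 S2 Hy => q W2 U2 L2 S2.
  move=> Hy; case/splitPr: Hy W2 U2 L2 S2 => p1 p2 W2 U2 L2 S2.
  exists p2; split.
  - by move: W2; case: (p1) => [|h s1] //=; rewrite cat_path /= => /andP [_ /andP [_ ->]].
  - by move: U2; rewrite cat_uniq => /and3P [_ _].
  - by rewrite -L2 last_cat.
  - by move=> E /(pedges_suffix p1) /S2.
exists (z :: t'); split => //.
- by rewrite /= eyz P'.
- by rewrite cons_uniq Hy; exact: U'.
- move=> E; rewrite pedges_cons2 in_cons => /orP [/eqP -> | H].
    by rewrite pedges_cons2 in_cons eqxx.
  by rewrite pedges_cons2 in_cons (S' _ H) orbT.
Qed.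
End Aux.

Lemma pairwise_flat (T U : eqType) (r : rel T) (r' : rel U) (f : U -> seq T) s :
  pairwise r' s ->
  (forall p q, r' p q -> forall p' q', p' \in f p -> q' \in f q -> r p' q') ->
  (forall p, p \in s -> pairwise r (f p)) ->
  pairwise r (flatten (map f s)).
Proof.
move=> + H; elim: s => [|p s IH] //= /andP [Hp Hs] Hf.
rewrite pairwise_cat; apply/and3P; split.
- apply/allrelP => p' y Hp' /flatten_mapP [q Hq Hy].
  by apply: (H p q) => //; move/allP: Hp; apply.
- by apply: Hf; rewrite mem_head.
- by apply: IH => // q Hq; apply: Hf; rewrite in_cons Hq orbT.
Qed.

Lemma ed_mono (V : finType) (p q p' q' : seq V) : edge_disjoint p q ->
  {subset pedges p' <= pedges p} -> {subset pedges q' <= pedges q} -> edge_disjoint p' q'.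
Proof.
move=> /hasPn H Hp Hq; apply/hasPn => E /Hp HE; apply/negP => /Hq HE'.
by move/negP: (H E HE).
Qed.

Section Easy.
Variable V : finType.
Variables (e : rel V) (P : {set {set V}}) (x : V).
Hypothesis sym : symmetric e.

Lemma del_path y t : path e y t -> x \notin y :: t -> path (del_vertex e x) y t.
Proof.
elim: t y => [|z t IH] y //= /andP [eyz Pt].
rewrite !in_cons !negb_or => /and3P [yx zx Ht].
apply/andP; split; first by rewrite /del_vertex eyz eq_sym yx eq_sym zx.
apply: IH => //.
by rewrite in_cons negb_or zx.
Qed.

Lemma conn_in y t w : path e y t -> x \notin y :: t -> w \in y :: t ->
  connect (del_vertex e x) y w.
Proof. by move=> Pt Hx Hw; apply: (path_connect (del_path Pt Hx)). Qed.

Lemma del_sym : symmetric (del_vertex e x).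
Proof. by move=> u w; rewrite /del_vertex sym; case: (e w u); case: (u != x); case: (w != x). Qed.

Lemma uniq_split_disj (p1 p2 : seq V) : uniq (p1 ++ x :: p2) ->
  edge_disjoint (rcons p1 x) (x :: p2).
Proof.
move=> U; have U1 : uniq (rcons p1 x).
  by move: U; rewrite -cat_rcons cat_uniq => /and3P [].
have key : forall w, w \in rcons p1 x -> w \in x :: p2 -> w = x.
  move=> w; rewrite mem_rcons in_cons => /orP [/eqP -> //| H1] H2.
  by move: U; rewrite cat_uniq => /and3P [_ /hasPn /(_ w H2)]; rewrite H1.
apply/hasPn => E H1; apply/negP => H2.
case: (pedges_uniq U1 H1) => y [z [yz Hy Hz EE]].
have U2 : uniq (x :: p2) by move: U; rewrite cat_uniq => /and3P [].
case: (pedges_uniq U2 H2) => y' [z' [_ Hy' Hz' EE']].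
have inE2 : forall w, w \in E -> w \in x :: p2.
  by move=> w; rewrite EE' => /set2P [] ->.
have Ey : y \in E by rewrite EE set21.
have Ez : z \in E by rewrite EE set22.
have := key y Hy (inE2 y Ey).
have := key z Hz (inE2 z Ez).
by move=> zx yx; rewrite yx zx eqxx in yz.
Qed.

Definition pieces (p : seq V) : seq (seq V) :=
  if x \in p then [:: rcons (take (index x p) p) x; x :: drop (index x p).+1 p]
  else [:: p].

Lemma split_x (p : seq V) : x \in p ->
  p = take (index x p) p ++ x :: drop (index x p).+1 p.
Proof.
move=> Hx; rewrite -{1}(cat_take_drop (index x p) p); congr (_ ++ _).
by rewrite (drop_nth x) ?index_mem // nth_index.
Qed.

Lemma pieces_props p q : wk e p -> uniq p -> q \in pieces p ->
  [/\ wk e q, uniq q & {subset pedges q <= pedges p}].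
Proof.
rewrite /pieces; case: ifP => Hx; last by move=> W U; rewrite inE => /eqP ->; split.
move: (split_x Hx); set p1 := take _ _; set p2 := drop _ _ => Ep.
rewrite Ep => W U; rewrite !inE => /orP [] /eqP ->.
- split.
  + move: W; rewrite -cat_rcons; case: (p1) => [|h s] //=.
    by rewrite cat_path => /andP [].
  + by move: U; rewrite -cat_rcons cat_uniq => /and3P [].
  + by rewrite -cat_rcons; apply: pedges_prefix.
- split.
  + by move: W; case: (p1) => [|h s] //=; rewrite cat_path /= => /andP [_ /andP [_]].
  + by move: U; rewrite cat_uniq => /and3P [].
  + exact: pedges_suffix.
Qed.

Lemma pieces_sub p q : q \in pieces p -> {subset pedges q <= pedges p}.
Proof.
rewrite /pieces; case: ifP => Hx; last by rewrite inE => /eqP ->.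
rewrite !inE => /orP [] /eqP -> E HE; rewrite (split_x Hx).
- by rewrite -cat_rcons; apply: pedges_prefix.
- exact: pedges_suffix.
Qed.

Lemma ends_mem (p : seq V) u w : u != w -> ends p u w -> u \in p /\ w \in p.
Proof.
case: p => [|h t] uw; rewrite /ends /=.
  by case/orP => /andP [_ /eqP E]; rewrite E eqxx in uw.
by case/orP => /andP [/eqP <- /eqP <-]; rewrite mem_head mem_last.
Qed.

Lemma pieces_disj (p : seq V) : uniq p -> pairwise (@edge_disjoint V) (pieces p).
Proof.
rewrite /pieces; case: ifP => Hx U //=.
rewrite !andbT; move: U; rewrite {1}(split_x Hx); exact: uniq_split_disj.
Qed.

Lemma easy (S : seq (seq V)) : edp_family e [set: V] S ->
  (forall a b, [set a; b] \in P -> a != b -> exists2 p, p \in S & ends p a b) ->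
  x \notin cover P ->
  forall v, v != x -> gamma0_connected e P x (component (del_vertex e x) v).
Proof.
move=> [HS PS] Hab xP v vx.
set C := component _ v.
pose keep (q : seq V) := all (mem (x |: C)) q.
exists (flatten [seq [seq q <- pieces p | keep q] | p <- S]); split; first split.
- move=> q /flatten_mapP [p Hp]; rewrite mem_filter => /andP [Hk Hq].
  case: (HS p Hp) => W U _.
  have Wp : wk e p by move: W; rewrite /wk; case: (p).
  case: (pieces_props Wp U Hq) => Wq Uq _; split => //; first by move: Wq; rewrite /wk; case: (q).
  by move=> w Hw; move/allP: Hk => /(_ w Hw).
- apply: (pairwise_flat PS).
    move=> p q Hpq p' q'; rewrite !mem_filter => /andP [_ Hp'] /andP [_ Hq'].
    by apply: (ed_mono Hpq); apply: pieces_sub.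
  move=> p Hp; apply: pairwise_filter; apply: pieces_disj.
  by case: (HS p Hp).
move=> a b aC Pab ab; case: (Hab a b Pab ab) => p Hp Ends.
have aP : a \in cover P by apply/bigcupP; exists [set a; b] => //; rewrite set21.
have bP : b \in cover P by apply/bigcupP; exists [set a; b] => //; rewrite set22.
have ax : a != x by apply: contraNneq xP => <-.
have bx : b != x by apply: contraNneq xP => <-.
case: (HS p Hp) => W U _.
have aC' : connect (del_vertex e x) v a by move: aC; rewrite /C /component inE.
have memSC : forall q, q \in pieces p -> keep q ->
    q \in flatten [seq [seq q <- pieces p | keep q] | p <- S].
  by move=> q Hq Hk; apply/flatten_mapP; exists p => //; rewrite mem_filter Hk.
have keepP : forall y t, path e y t -> x \notin y :: t -> forall w0, w0 \in y :: t ->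
    connect (del_vertex e x) v w0 -> {subset y :: t <= x |: C}.
  move=> y t Pt Hx w0 Hw0 Cw0 w Hw; rewrite in_setU1 /C /component inE; apply/orP; right.
  apply: connect_trans Cw0 _; apply: (connect_trans (y:=y)).
    by rewrite (sym_connect_sym del_sym); exact: conn_in Pt Hx Hw0.
  exact: conn_in Pt Hx Hw.
case Hx: (x \in p).
- have Hpc : pieces p = [:: rcons (take (index x p) p) x; x :: drop (index x p).+1 p].
    by rewrite /pieces Hx.
  move: (split_x Hx) Hpc; move: (take _ _) (drop _ _) => p1 p2 Ep Hpc.
  rewrite Ep in W U Ends.
  case: p1 Ep W U Ends Hpc => [|h p1] Ep W U Ends Hpc.
    by move: Ends; rewrite /ends /= => /orP [] /andP [/eqP xa _]; rewrite xa eqxx in ax bx.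
  move: Ends; rewrite /ends /= last_cat /= => /orP [/andP [/eqP ha /eqP lb] | /andP [/eqP hb /eqP la]].
  + subst h; left; exists (rcons (a :: p1) x).
      apply: memSC; first by rewrite Hpc mem_head.
      have Pt : path e a p1 by move: W; rewrite /= cat_path => /andP [].
      have Hx1 : x \notin a :: p1.
        by move: U; rewrite cat_uniq => /and3P [_ /hasPn /(_ x (mem_head _ _))].
      apply/allP => w; rewrite mem_rcons in_cons => /orP [/eqP -> | Hw].
        by rewrite /= in_setU1 eqxx.
      exact: (keepP a p1 Pt Hx1 a (mem_head _ _) aC' w Hw).
    rewrite /ends /= last_rcons !eqxx /=.
    rewrite -rcons_cons mem_rcons in_cons negb_or bx /=.
    have Hb : b \in x :: p2 by rewrite -lb mem_last.
    by move: U; rewrite cat_uniq => /and3P [_ /hasPn /(_ b Hb)].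
  + subst h; left; exists (x :: p2).
      apply: memSC; first by rewrite Hpc in_cons mem_head orbT.
      clear Ep; case: p2 W U la Hpc => [|k p2] W U la Hpc; first by rewrite /= -la eqxx in ax.
      have Pt : path e k p2.
        by move: W; rewrite /= cat_path /= => /andP [_ /andP [_ /andP [_]]].
      have Hx1 : x \notin k :: p2.
        by move: U; rewrite cat_uniq /= => /and3P [_ _ /andP []].
      apply/allP => w; rewrite in_cons => /orP [/eqP -> | Hw].
        by rewrite /= in_setU1 eqxx.
      have Ha : a \in k :: p2 by rewrite -la /= mem_last.
      exact: (keepP k p2 Pt Hx1 a Ha aC' w Hw).
    rewrite /ends /= la !eqxx orbT /=.
    by move: U; rewrite /= mem_cat negb_or => /andP [/andP [_ ->]].
- right; exists p; last by rewrite Ends Hx.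
  apply: memSC; first by rewrite /pieces Hx mem_head.
  case: (ends_mem ab Ends) => Ha _.
  case: p Hp Ends Hx W U Ha => [|h t] // Hp Ends Hx W U Ha.
  apply/allP => w Hw; apply: (keepP h t W _ a Ha aC' w Hw).
  by rewrite Hx.
Qed.

End Easy.

Lemma ends_sym (V : finType) (p : seq V) u v : ends p u v = ends p v u.
Proof. by rewrite /ends orbC. Qed.

Lemma ends_eq (V : finType) (p : seq V) u c u' c' : ends p u c -> ends p u' c' -> u != c ->
  u = u' \/ u = c'.
Proof.
case: p => [|h t]; rewrite /ends /=.
  by move=> /orP [] /andP [_ /eqP ->] _; rewrite eqxx.
move=> /orP [] /andP [/eqP E1 /eqP E2] /orP [] /andP [/eqP E3 /eqP E4] uc.
- by left; rewrite -E1 E3.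
- by right; rewrite -E1 E3.
- by right; rewrite -E2 E4.
- by left; rewrite -E2 E4.
Qed.

Lemma set2_eq (V : finType) (a b a' b' : V) : a != b -> [set a; b] = [set a'; b'] ->
  (a = a' /\ b = b') \/ (a = b' /\ b = a').
Proof.
move=> ab E.
have Ha : a \in [set a'; b'] by rewrite -E set21.
have Hb : b \in [set a'; b'] by rewrite -E set22.
case/set2P: Ha => Ha; case/set2P: Hb => Hb; subst.
- by rewrite eqxx in ab.
- by left.
- by right.
- by rewrite eqxx in ab.
Qed.

Lemma pairwise_mem (T : eqType) (r : rel T) s a b : pairwise r s -> a \in s -> b \in s -> a != b ->
  r a b || r b a.
Proof.
elim: s => [|y s IH] //= /andP [Hy Hs].
rewrite !in_cons => /orP [/eqP -> | Ha] /orP [/eqP -> | Hb]; rewrite ?eqxx //.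
- by move=> _; move/allP: Hy => /(_ b Hb) ->.
- by move=> _; move/allP: Hy => /(_ a Ha) ->; rewrite orbT.
- by move=> ab; apply: IH.
Qed.

Lemma pairwise_uniq_all (T : eqType) (r : rel T) s : uniq s ->
  (forall a b, a \in s -> b \in s -> a != b -> r a b) -> pairwise r s.
Proof.
elim: s => [|y s IH] //= /andP [ys Us] H.
apply/andP; split.
  apply/allP => b Hb; apply: H; rewrite ?mem_head ?in_cons ?Hb ?orbT //.
  by apply: contraNneq ys => ->.
apply: IH => // a b Ha Hb; apply: H; by rewrite in_cons ?Ha ?Hb orbT.
Qed.

Lemma ed_sym (V : finType) (p q : seq V) : edge_disjoint p q = edge_disjoint q p.
Proof.
apply/idP/idP => /hasPn H; apply/hasPn => E H1; apply/negP => H2;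
  by move/negP: (H E H2).
Qed.

Section Hard.
Variable V : finType.
Variables (e : rel V) (P : {set {set V}}) (x : V).
Hypothesis sym : symmetric e.
Hypothesis TP : terminal_pairs P.
Hypothesis xP : x \notin cover P.

Definition G0P (C : {set V}) (S : seq (seq V)) :=
  edp_family e (x |: C) S /\
    forall a b, a \in C -> [set a; b] \in P -> a != b ->
      (exists2 p, p \in S & ends p a x && (b \notin p)) \/
      (exists2 p, p \in S & ends p a b && (x \notin p)).

Local Notation comp := (component (del_vertex e x)).

Lemma term_nx a q : q \in P -> a \in q -> a != x.
Proof. by move=> Pq aq; apply: contraNneq xP => <-; apply/bigcupP; exists q. Qed.

Lemma pair_eq q q' w : q \in P -> q' \in P -> w \in q -> w \in q' -> q = q'.
Proof.
move=> Pq Pq' wq wq'; apply/eqP; apply: contraT => nq.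
by move: (TP.2 q q' Pq Pq' nq) => /disjointFr /(_ wq); rewrite wq'.
Qed.

Lemma partner q u : q \in P -> u \in q -> exists w, u != w /\ q = [set u; w].
Proof.
move=> Pq uq; case/cards2P: (introT eqP (TP.1 q Pq)) => y [z [yz Eq]].
move: uq; rewrite Eq => /set2P [] ->; first by exists z.
by exists y; rewrite eq_sym setUC.
Qed.

Lemma comp_eq u u' w : w \in comp u -> w \in comp u' -> comp u = comp u'.
Proof.
rewrite !inE => H1 H2; apply/setP => z; rewrite !inE.
have cs := sym_connect_sym (del_sym x sym).
by rewrite (same_connect cs H1) (same_connect cs H2).
Qed.

Variable fam : {set V} -> seq (seq V).
Hypothesis Hfam : forall v, v != x -> G0P (comp v) (fam (comp v)).

Definition goodt (a : V) (p : seq V) :=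
  [exists b, ([set a; b] \in P) && (a != b) && (ends p a x || ends p a b)].

Definition m (a : V) := nth [::] (fam (comp a)) (find (goodt a) (fam (comp a))).

Lemma m_props a b : [set a; b] \in P -> a != b ->
  [/\ m a \in fam (comp a), wk e (m a), uniq (m a), {subset m a <= x |: comp a}
    & ends (m a) a x || ends (m a) a b].
Proof.
move=> Pab ab.
have ax : a != x by apply: (term_nx Pab); rewrite set21.
case: (Hfam ax) => [[HS PS] Hc].
have Hh : has (goodt a) (fam (comp a)).
  have aC : a \in comp a by rewrite inE connect0.
  case: (Hc a b aC Pab ab) => [[p Hp /andP [E1 _]] | [p Hp /andP [E1 _]]];
    apply/hasP; exists p => //; apply/existsP; exists b; by rewrite Pab ab E1 ?orbT.
have Mm : m a \in fam (comp a) by rewrite /m; apply: mem_nth; rewrite -has_find.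
have := nth_find [::] Hh; rewrite -/(m a) => /existsP [b' /andP [/andP [Pab' ab'] E]].
have bb : b' = b.
  have := pair_eq Pab Pab' (set21 a b) (set21 a b').
  move=> Eq; have : b' \in [set a; b] by rewrite Eq set22.
  by case/set2P => // E'; rewrite E' eqxx in ab'.
subst b'; case: (HS _ Mm) => W U Sub; split => //.
by move: W; rewrite /wk; case: (m a).
Qed.

Lemma m_disj q q' u u' : q \in P -> q' \in P -> q != q' -> u \in q -> u' \in q' ->
  edge_disjoint (m u) (m u').
Proof.
move=> Pq Pq' qq' uq uq'.
case: (partner Pq uq) => w [uw Eq]; case: (partner Pq' uq') => w' [uw' Eq'].
have Pu : [set u; w] \in P by rewrite -Eq.
have Pu' : [set u'; w'] \in P by rewrite -Eq'.
case: (m_props Pu uw) => M1 W1 U1 S1 E1.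
case: (m_props Pu' uw') => M2 W2 U2 S2 E2.
have ux : u != x by apply: (term_nx Pq uq).
have u'x : u' != x by apply: (term_nx Pq' uq').
have nin : forall z, z \in q -> z \in q' -> False.
  by move=> z zq zq'; move: qq'; rewrite (pair_eq Pq Pq' zq zq') eqxx.
have uu' : u != u' by apply/eqP => E; subst; apply: (nin u').
have uw'' : u != w'.
  by apply/eqP => E; apply: (nin u) => //; rewrite Eq' E set22.
case: (eqVneq (comp u) (comp u')) => Ecomp.
- case: (Hfam ux) => [[_ PS] _].
  rewrite -Ecomp in M2.
  have mm : m u != m u'.
    apply/eqP => Em.
    have [c [Ec uc]] : exists c, ends (m u) u c /\ u != c.
      by case/orP: E1 => E1; [exists x | exists w].
    have [c' [Ec' Hc']] : exists c', ends (m u) u' c' /\ (c' = x \/ c' = w').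
      by rewrite Em; case/orP: E2 => E2; [exists x; split; [|left] | exists w'; split; [|right]].
    case: (ends_eq Ec Ec' uc) => E; first by rewrite E eqxx in uu'.
    by case: Hc' => E'; subst; rewrite eqxx in ux uw''.
  by case/orP: (pairwise_mem PS M1 M2 mm) => //; rewrite ed_sym.
- apply/hasPn => E H1; apply/negP => H2.
  case: (pedges_uniq U1 H1) => y [z [yz Hy Hz EE]].
  case: (pedges_uniq U2 H2) => y' [z' [_ Hy' Hz' EE']].
  have inE2 : forall t, t \in E -> t \in m u'.
    by move=> t; rewrite EE' => /set2P [] ->.
  have key : forall t, t \in m u -> t \in m u' -> t = x.
    move=> t /S1 H3 /S2 H4; move: H3 H4; rewrite !in_setU1 => /orP [/eqP //|H3] /orP [/eqP //|H4].
    by move: Ecomp; rewrite (comp_eq H3 H4) eqxx.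
  have Ey : y \in E by rewrite EE set21.
  have Ez : z \in E by rewrite EE set22.
  have := key y Hy (inE2 y Ey); have := key z Hz (inE2 z Ez).
  by move=> zx yx; rewrite yx zx eqxx in yz.
Qed.

Lemma pair_path q : q \in P -> exists p : seq V, exists a b t,
  [/\ q = [set a; b], a != b, p = a :: t & [/\ path e a t, uniq p, last a t = b
    & {subset pedges p <= pedges (m a) ++ pedges (m b)}]].
Proof.
move=> Pq; case/cards2P: (introT eqP (TP.1 q Pq)) => a [b [ab Eq]].
have Pab : [set a; b] \in P by rewrite -Eq.
have Pba : [set b; a] \in P by rewrite setUC -Eq.
have ba : b != a by rewrite eq_sym.
case: (m_props Pab ab) => _ Wa Ua _ Ea.
case: (m_props Pba ba) => _ Wb Ub _ Eb.
have ax : a != x by apply: (term_nx Pq); rewrite Eq set21.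
have bx : b != x by apply: (term_nx Pq); rewrite Eq set22.
case Eab: (ends (m a) a b).
  case: (orient sym Wa Ua Eab ab) => t [Pt Ut Lt St].
  by exists (a :: t), a, b, t; split => //; split => // E /St; rewrite mem_cat => ->.
case Eba: (ends (m b) b a).
  rewrite ends_sym in Eba.
  case: (orient sym Wb Ub Eba ab) => t [Pt Ut Lt St].
  by exists (a :: t), a, b, t; split => //; split => // E /St; rewrite mem_cat => ->; rewrite orbT.
have Eax : ends (m a) a x by move: Ea; rewrite Eab orbF.
have Ebx : ends (m b) x b by move: Eb; rewrite Eba orbF ends_sym.
case: (orient sym Wa Ua Eax ax) => t1 [P1 U1 L1 S1].
have xb : x != b by rewrite eq_sym.
case: (orient sym Wb Ub Ebx xb) => t2 [P2 U2 L2 S2].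
have Pw : path e a (t1 ++ t2) by rewrite cat_path P1 L1 P2.
case: (shorten_walk Pw) => t [Pt Ut Lt St].
exists (a :: t), a, b, t; split => //; split => //.
  by rewrite Lt last_cat L1 L2.
move=> E /St; rewrite pedges_cat mem_cat L1 => /orP [/S1 H | /S2 H];
  by rewrite mem_cat H ?orbT.
Qed.

End Hard.

Lemma hard (V : finType) (e : rel V) (P : {set {set V}}) (x : V) :
  symmetric e -> terminal_pairs P -> x \notin cover P ->
  (forall v, v != x -> gamma0_connected e P x (component (del_vertex e x) v)) ->
  exists S : seq (seq V), edp_family e [set: V] S /\
     forall a b, [set a; b] \in P -> a != b ->
       exists2 p, p \in S & ends p a b.
Proof.
move=> sym TP xP H.
have Hc : forall C : {set V}, exists S, [exists v, (v != x) && (C == component (del_vertex e x) v)] ->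
    G0P e P x C S.
  move=> C; case: (boolP [exists v, _]) => [/existsP [v /andP [vx /eqP ->]] | _]; last by exists [::].
  by case: (H v vx) => S HS; exists S.
pose fam C := proj1_sig (constructive_indefinite_description _ (Hc C)).
have Hfam : forall v, v != x ->
    G0P e P x (component (del_vertex e x) v) (fam (component (del_vertex e x) v)).
  move=> v vx; rewrite /fam; case: (constructive_indefinite_description _ _) => S /= HS; apply: HS.
  by apply/existsP; exists v; rewrite vx eqxx.
pose mm := m e P x fam.
have Hpp : forall q, exists p : seq V, q \in P -> exists a b t,
  [/\ q = [set a; b], a != b, p = a :: t & [/\ path e a t, uniq p, last a t = b
    & {subset pedges p <= pedges (mm a) ++ pedges (mm b)}]].
  move=> q; case: (boolP (q \in P)) => Pq; last by exists [::].
  by case: (pair_path sym TP xP Hfam Pq) => p Hp; exists p.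
pose pi q := proj1_sig (constructive_indefinite_description _ (Hpp q)).
have Hpi : forall q, q \in P -> exists a b t,
  [/\ q = [set a; b], a != b, pi q = a :: t & [/\ path e a t, uniq (pi q), last a t = b
    & {subset pedges (pi q) <= pedges (mm a) ++ pedges (mm b)}]].
  by move=> q Pq; rewrite /pi; case: (constructive_indefinite_description _ _) => p /= Hp; apply: Hp.
exists [seq pi q | q <- enum P]; split; first split.
- move=> p /mapP [q]; rewrite mem_enum => Pq ->.
  case: (Hpi q Pq) => a [b [t [_ _ Ep [Pt Ut _ _]]]].
  by move: Ut; rewrite Ep => Ut; split => // w _; rewrite in_setT.
- rewrite pairwise_map; apply: pairwise_uniq_all; first exact: enum_uniq.
  move=> q q'; rewrite !mem_enum => Pq Pq' qq'.
  case: (Hpi q Pq) => a [b [t [Eq ab _ [_ _ _ Sp]]]].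
  case: (Hpi q' Pq') => a' [b' [t' [Eq' ab' _ [_ _ _ Sp']]]].
  rewrite /relpre; apply/hasPn => E H1; apply/negP => H2.
  have Hd : forall u u', u \in q -> u' \in q' -> E \in pedges (mm u) -> E \in pedges (mm u') -> False.
    move=> u u' uq uq' h1 h2.
    by move/hasPn: (m_disj sym TP xP Hfam Pq Pq' qq' uq uq') => /(_ E h1) /negP; apply.
  move: (Sp E H1) (Sp' E H2); rewrite !mem_cat => /orP [] h1 /orP [] h2;
    [apply: (Hd a a') | apply: (Hd a b') | apply: (Hd b a') | apply: (Hd b b')];
    by rewrite ?Eq ?Eq' ?set21 ?set22.
- move=> a b Pab ab; exists (pi [set a; b]); first by apply: map_f; rewrite mem_enum.
  case: (Hpi _ Pab) => a' [b' [t [Eq _ -> [_ _ Lt _]]]].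
  by case: (set2_eq ab Eq) => [[-> ->] | [-> ->]]; rewrite /ends /= Lt !eqxx //= orbT.
Qed.


Theorem mainTheorem11 (V : finType) (e : rel V) (P : {set {set V}}) (x : V) :
  simple_graph e ->
  terminal_pairs P ->
  acyclic (del_vertex e x) ->
  (forall a, a \in cover P -> deg e a = 1) ->
  (forall a b, [set a; b] \in P -> ~~ e a b) ->
  (forall v, e x v -> deg (del_vertex e x) v <= 1) ->
  x \notin cover P ->
  (exists S : seq (seq V), edp_family e [set: V] S /\
     forall a b, [set a; b] \in P -> a != b ->
       exists2 p, p \in S & ends p a b)
  <->
  (forall v, v != x -> gamma0_connected e P x (component (del_vertex e x) v)).
Proof.
move=> [sym _] TP _ _ _ _ xP; split.
  by move=> [S [HS Hab]]; apply: (easy sym HS Hab xP).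
exact: hard.
Qed.
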